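(* For every graph $G$, $\operatorname{smw}(G)\le\operatorname{tw}(G)+1$, where $\operatorname{tw}$ denotes treewidth. Moreover, for every class of graphs of bounded sm-width, the clique-width is bounded on that class.
   Context: A split of $G$ is a partition $(V_1,V_2)$ of $V(G)$ with $|V_1|,|V_2|\ge2$ such that every vertex of $V_1$ with a neighbour in $V_2$ has the same neighbourhood in $V_2$. $\operatorname{mm}(A)$ is the maximum size of a matching among edges between $A$ and $V(G)\setminus A$; $\operatorname{sm}(A)=1$ if $(A,V(G)\setminus A)$ is a split, else $\operatorname{mm}(A)$. A branch decomposition of $G$: tree of max degree 3 with a bijection from leaves to $V(G)$; each tree edge $e$ induces the cut given by leaf-images of the two components of $T-e$. $\operatorname{smw}(G)$ is the minimum over branch decompositions of the maximum of $\operatorname{sm}$ over induced cuts. *)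

(* Defs.v *)
From HB Require Import structures.
From mathcomp Require Import all_boot.
Set Implicit Arguments. Unset Strict Implicit. Unset Printing Implicit Defensive.

Definition is_graph (V : finType) (E : rel V) : Prop :=
  symmetric E /\ irreflexive E.

Definition del_edge (N : finType) (t : rel N) (a b : N) : rel N :=
  [rel x y | t x y && ~~ ((x == a) && (y == b) || (x == b) && (y == a))].

(* A tree: nonempty, simple, connected graph in which every edge is a bridge
   (i.e. acyclic). *)
Definition is_tree (N : finType) (t : rel N) : Prop :=
  [/\ 0 < #|N|, is_graph t,
      (forall x y : N, connect t x y) &
      (forall a b : N, t a b -> ~~ connect (del_edge t a b) a b)].

Definition degree (N : finType) (t : rel N) (x : N) : nat := #|[set y | t x y]|.

(* Leaves: nodes of degree at most 1 (degree 0 only for the one-node tree). *)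
Definition is_leaf (N : finType) (t : rel N) (x : N) : bool := degree t x <= 1.

Definition tree_decomposition (V : finType) (E : rel V)
    (N : finType) (t : rel N) (bag : N -> {set V}) (k : nat) : Prop :=
  [/\ is_tree t,
      (forall v : V, exists x : N, v \in bag x),
      (forall u v : V, E u v -> exists x : N, (u \in bag x) && (v \in bag x)),
      (forall (v : V) (a b : N), v \in bag a -> v \in bag b ->
          connect [rel x y | t x y && (v \in bag x) && (v \in bag y)] a b) &
      (forall x : N, #|bag x| <= k.+1)].

Definition tw_le (V : finType) (E : rel V) (k : nat) : Prop :=
  exists (N : finType) (t : rel N) (bag : N -> {set V}),
    tree_decomposition E t bag k.

Definition cut_matching (V : finType) (E : rel V) (A : {set V})
    (M : {set V * V}) : bool :=
  [forall p in M, [&& p.1 \in A, p.2 \notin A & E p.1 p.2]] &&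
  [forall p in M, forall q in M, ((p.1 == q.1) || (p.2 == q.2)) ==> (p == q)].

Definition mm (V : finType) (E : rel V) (A : {set V}) : nat :=
  \max_(M : {set V * V} | cut_matching E A M) #|M|.

Definition is_split (V : finType) (E : rel V) (A : {set V}) : bool :=
  [&& 2 <= #|A|, 2 <= #|~: A| &
   [forall x in A, forall y in A,
      ([exists z in ~: A, E x z] && [exists z in ~: A, E y z]) ==>
      [forall z in ~: A, E x z == E y z]]].

Definition sm (V : finType) (E : rel V) (A : {set V}) : nat :=
  if is_split E A then 1 else mm E A.

Definition branch_decomposition (V : finType) (N : finType) (t : rel N)
    (f : V -> N) : Prop :=
  [/\ is_tree t, (forall x : N, degree t x <= 3), injective f &
      (forall x : N, is_leaf t x <-> exists v : V, f v = x)].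

Definition induced_cut (V : finType) (N : finType) (t : rel N) (f : V -> N)
    (a b : N) : {set V} :=
  [set v | connect (del_edge t a b) a (f v)].

Definition bd_smwidth (V : finType) (E : rel V) (N : finType) (t : rel N)
    (f : V -> N) : nat :=
  \max_(p : N * N | t p.1 p.2) sm E (induced_cut t f p.1 p.2).

(* smw(G) <= w.  Convention: the graph with no vertices has smw 0. *)
Definition smw_le (V : finType) (E : rel V) (w : nat) : Prop :=
  #|V| = 0 \/
  exists (N : finType) (t : rel N) (f : V -> N),
    branch_decomposition t f /\ bd_smwidth E t f <= w.

Definition sum_rel (V1 V2 : finType) (E1 : rel V1) (E2 : rel V2)
    : rel (V1 + V2)%type :=
  fun x y => match x, y with
             | inl a, inl b => E1 a b
             | inr a, inr b => E2 a b
             | _, _ => false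
             end.

Definition sum_lab (k : nat) (V1 V2 : finType) (l1 : V1 -> 'I_k) (l2 : V2 -> 'I_k)
    : (V1 + V2)%type -> 'I_k :=
  fun x => match x with inl a => l1 a | inr b => l2 b end.

(* k_expr k V E l : the labelled graph (V,E,l) (labels in 'I_k) is, up to
   isomorphism, the value of a k-expression. *)
Inductive k_expr (k : nat) : forall V : finType, rel V -> (V -> 'I_k) -> Prop :=
  | ke_empty (l : void -> 'I_k) : k_expr (fun _ _ => false) l
  | ke_vertex (i : 'I_k) : k_expr (fun _ _ : unit => false) (fun _ => i)
  | ke_union (V1 V2 : finType) E1 E2 l1 l2 :
      @k_expr k V1 E1 l1 -> @k_expr k V2 E2 l2 ->
      @k_expr k (V1 + V2)%type (sum_rel E1 E2) (sum_lab l1 l2)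
  | ke_join (V : finType) E l (i j : 'I_k) :
      @k_expr k V E l -> i != j ->
      @k_expr k V (fun x y => E x y || ((l x == i) && (l y == j))
                                    || ((l x == j) && (l y == i))) l
  | ke_relabel (V : finType) E l (i j : 'I_k) :
      @k_expr k V E l ->
      @k_expr k V E (fun x => if l x == i then j else l x)
  | ke_iso (V W : finType) (E : rel V) (l : V -> 'I_k) (E' : rel W)
      (l' : W -> 'I_k) (g : V -> W) :
      @k_expr k V E l -> bijective g ->
      (forall x y, E' (g x) (g y) = E x y) -> (forall x, l' (g x) = l x) ->
      @k_expr k W E' l'.

Definition cw_le (V : finType) (E : rel V) (c : nat) : Prop :=
  exists l : V -> 'I_c, k_expr E l.

(* Main.v *)
Require Import Defs.
From HB Require Import structures.
From mathcomp Require Import all_boot.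
From mathcomp Require Import zify.
Set Implicit Arguments. Unset Strict Implicit. Unset Printing Implicit Defensive.

Lemma connect_ind (T : finType) (e : rel T) (P : T -> Prop) x y :
  connect e x y -> P x -> (forall u v, e u v -> P u -> P v) -> P y.
Proof.
move/connectP=> [s pth ->] Px HP; elim: s x pth Px => //= z s IH x /andP[exz pth] Px.
exact: (IH z pth (HP _ _ exz Px)).
Qed.

Section TreeLemmas.
Variables (N : finType) (t : rel N).
Hypothesis Ht : is_tree t.

Definition comp (x p : N) := [set y | connect (del_edge t x p) x y].

Lemma tsym : symmetric t. Proof. by case: Ht => _ [] . Qed.
Lemma tirr : irreflexive t. Proof. by case: Ht => _ []. Qed.

Definition is_edge (a b y z : N) := ((y == a) && (z == b)) || ((y == b) && (z == a)).

Lemma del_edgeE a b y z : del_edge t a b y z = t y z && ~~ is_edge a b y z.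
Proof. by []. Qed.

Lemma del_sym a b : symmetric (del_edge t a b).
Proof.
move=> y z; rewrite !del_edgeE tsym /is_edge.
by case: (y == a); case: (z == b); case: (y == b); case: (z == a).
Qed.

Lemma del_swap a b : del_edge t a b =2 del_edge t b a.
Proof.
move=> y z; rewrite !del_edgeE /is_edge.
by case: (y == a); case: (z == b); case: (y == b); case: (z == a).
Qed.

Lemma comp_self x p : x \in comp x p.
Proof. by rewrite inE connect0. Qed.

Lemma comp_step x p y z : y \in comp x p -> del_edge t x p y z -> z \in comp x p.
Proof. by rewrite !inE => H1 H2; apply: connect_trans H1 (connect1 H2). Qed.

Lemma comp_step' x p y z : z \in comp x p -> del_edge t x p y z -> y \in comp x p.
Proof. by move=> H1 H2; apply: comp_step H1 _; rewrite del_sym. Qed.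

Lemma bridge c x : t c x -> x \notin comp c x.
Proof. by case: Ht => _ _ _ H /H; rewrite inE. Qed.

Lemma step_cases a b y z : t y z -> del_edge t a b y z \/ is_edge a b y z.
Proof. by move=> tyz; rewrite del_edgeE tyz /=; case: (is_edge a b y z); [right|left]. Qed.


Lemma comp_sub x p c y : t x c -> c != p -> y \in comp c x -> y \in comp x p.
Proof.
move=> txc cp; rewrite inE => H.
have Hc : c \in comp x p.
  apply: (comp_step (comp_self x p)); rewrite del_edgeE txc /is_edge eqxx /=.
  rewrite (negbTE cp) /=; apply/negP => /andP[_ /eqP cx]; by move: txc; rewrite cx tirr.
pose P y := y \in comp c x /\ y \in comp x p.
have : P y.
  apply: (connect_ind H); first by split; [apply: comp_self|].
  move=> u v duv [H1 H2]; have H1' := comp_step H1 duv; split => //.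
  have tuv : t u v by move: duv; rewrite del_edgeE => /andP[].
  case: (step_cases x p tuv) => [d|/orP[]/andP[/eqP ux /eqP vp]]; first exact: comp_step H2 d.
  + by subst u; move: (bridge (etrans (tsym c x) txc)); rewrite H1.
  + by subst v; move: (bridge (etrans (tsym c x) txc)); rewrite H1'.
by case.
Qed.

Lemma comp_lt x p c : t x c -> c != p -> #|comp c x| < #|comp x p|.
Proof.
move=> txc cp; apply: proper_card; apply/properP; split.
  by apply/subsetP => y; apply: comp_sub.
by exists x; [apply: comp_self | apply: bridge; rewrite tsym].
Qed.

Lemma comp_split x p y : y \in comp x p ->
  y = x \/ exists c, [/\ t x c, c != p & y \in comp c x].
Proof.
rewrite inE => H; apply: (@connect_ind _ _ (fun y => y = x \/ exists c, [/\ t x c, c != p & y \in comp c x]) _ _ H); first by left.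
move=> u v duv [eux|[c [txc cp Hu]]].
  subst u; right; exists v; split; last exact: comp_self.
    by move: duv; rewrite del_edgeE => /andP[].
  apply/negP => /eqP vp; move: duv; rewrite del_edgeE /is_edge vp !eqxx /=.
  by rewrite andbF.
have tuv : t u v by move: duv; rewrite del_edgeE => /andP[].
case: (step_cases c x tuv) => [d|/orP[]/andP[/eqP uc /eqP vx]].
- by right; exists c; split => //; apply: comp_step Hu d.
- by left.
- by subst u; move: (bridge (etrans (tsym c x) txc)); rewrite Hu.
Qed.

Lemma comp_disj x c d y : t x c -> t x d -> c != d -> y \in comp c x -> y \notin comp d x.
Proof.
move=> txc txd cd Hc; apply/negP; rewrite inE => H.
have : y \in comp d x /\ y \notin comp c x.
  apply: (@connect_ind _ _ (fun y => y \in comp d x /\ y \notin comp c x) _ _ H).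
    split; first exact: comp_self.
    apply/negP => dc.
    have dd : del_edge t c x d x.
      rewrite del_edgeE tsym txd /is_edge /=; apply/negP => /orP[]/andP[/eqP e1 /eqP e2].
      - by move: cd; rewrite e1 eqxx.
      - by move: txd; rewrite e1 tirr.
    by move: (bridge (etrans (tsym c x) txc)); rewrite (comp_step dc dd).
  move=> u v duv [Hdu Hcu]; have Hdv := comp_step Hdu duv; split => //.
  apply/negP => Hcv.
  have tuv : t u v by move: duv; rewrite del_edgeE => /andP[].
  case: (step_cases c x tuv) => [d'|/orP[]/andP[/eqP uc /eqP vx]].
  - by move: Hcu; rewrite (comp_step' Hcv d').
  - by subst u; move: Hcu; rewrite comp_self.
  - by subst u; move: (bridge (etrans (tsym d x) txd)); rewrite Hdu.
by case=> _; rewrite Hc.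
Qed.

Lemma connected x y : connect t x y.
Proof. by case: Ht => _ _ H _; apply: H. Qed.

Lemma comp_root x : comp x x = setT.
Proof.
apply/setP => y; rewrite !inE; rewrite (@eq_connect _ _ t) ?connected //.
move=> u v; rewrite del_edgeE /is_edge orbb.
case: (boolP (u == x)) => [/eqP->|] /=; last by rewrite andbT.
by case: (boolP (v == x)) => [/eqP->|] /=; rewrite ?tirr ?andbT.
Qed.

Lemma comp_cover a b y : t a b -> (y \in comp a b) || (y \in comp b a).
Proof.
move=> tab; apply: (@connect_ind _ _ (fun y => (y \in comp a b) || (y \in comp b a)) _ _ (connected a y)); first by rewrite comp_self.
move=> u v tuv /orP[H|H].
- case: (step_cases a b tuv) => [d|/orP[]/andP[_ /eqP ->]].
  + by rewrite (comp_step H d).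
  + by rewrite comp_self orbT.
  + by rewrite comp_self.
- case: (step_cases a b tuv) => [d|/orP[]/andP[_ /eqP ->]].
  + by rewrite (comp_step H (_ : del_edge t b a u v)) ?orbT // -del_swap.
  + by rewrite comp_self orbT.
  + by rewrite comp_self.
Qed.

Lemma comp_cover_disj a b y : t a b -> y \in comp a b -> y \notin comp b a.
Proof.
move=> tab; rewrite !inE => H1; apply/negP => H2.
move: (bridge tab); rewrite inE; apply/negP/negPn.
apply: connect_trans H1 _; rewrite (sym_connect_sym (@del_sym a b)).
by rewrite (eq_connect (@del_swap a b)).
Qed.

Lemma comp_leaf a b : degree t a <= 1 -> t a b -> comp a b = [set a].
Proof.
move=> dg tab; apply/setP => y; rewrite inE; apply/idP/idP; last by move/eqP->; apply: comp_self.
rewrite inE => H; apply: (@connect_ind _ _ (fun y => y == a) _ _ H) => // u v duv /eqP ua; subst u.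
move: duv; rewrite del_edgeE /is_edge => /andP[tav].
case: (boolP (v == b)) => [/eqP->|vb]; first by rewrite eqxx.
move=> _; exfalso; move: dg; rewrite /degree.
have : [set b; v] \subset [set y | t a y].
  by apply/subsetP => z; rewrite !inE => /orP[]/eqP->.
move/subset_leq_card; rewrite cards2 eq_sym (negbTE vb) /= => H1 H2.
by move: (leq_trans H1 H2).
Qed.

End TreeLemmas.

Section Cover.
Variables (V : finType) (E : rel V).

Definition cover (A C : {set V}) :=
  forall u w, u \in A -> w \notin A -> E u w -> (u \in C) || (w \in C).

Lemma mm_cover A C : cover A C -> mm E A <= #|C|.
Proof.
move=> HC; apply/bigmax_leqP => M /andP[/forallP H1 /forallP H2].
pose phi (p : V * V) := if p.1 \in C then p.1 else p.2.
have inj : {in M &, injective phi}.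
  move=> p q pM qM; move: (H2 p); rewrite pM /= => /forallP /(_ q); rewrite qM /=.
  move: (H1 p) (H1 q); rewrite pM qM /= => /and3P[p1 p2 _] /and3P[q1 q2 _] Hpq.
  rewrite /phi; case: (p.1 \in C); case: (q.1 \in C) => E0; apply/eqP; apply: (implyP Hpq).
  - by rewrite E0 eqxx.
  - by move: p1; rewrite E0 (negbTE q2).
  - by move: q1; rewrite -E0 (negbTE p2).
  - by rewrite E0 eqxx orbT.
rewrite -(card_in_imset inj); apply: subset_leq_card; apply/subsetP => z /imsetP[p pM ->].
move: (H1 p); rewrite pM /= => /and3P[p1 p2 pE]; rewrite /phi.
by case: ifP => // /negbT H; move: (HC _ _ p1 p2 pE); rewrite (negbTE H).
Qed.

Lemma cover_compl A C : symmetric E -> cover A C -> cover (~: A) C.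
Proof.
move=> Es HC u w; rewrite !inE negbK => uA wA Euw.
by rewrite orbC; apply: HC => //; rewrite Es.
Qed.

Lemma sm_cover A C k : cover A C -> #|C| <= k.+1 -> sm E A <= k.+1.
Proof.
move=> HC Ck; rewrite /sm; case: ifP => // _.
by apply: leq_trans (mm_cover HC) Ck.
Qed.

End Cover.

Section BT.
Variable V : finType.

Inductive bt := BLeaf of V | BNode of bt & bt.

Fixpoint leaves B := match B with BLeaf v => [:: v] | BNode l r => leaves l ++ leaves r end.
Definition stepb (b : bool) (T : bt) : option bt :=
  if T is BNode l r then Some (if b then r else l) else None.
Fixpoint sub B (s : seq bool) : option bt :=
  match s with [::] => Some B | b :: s' => obind (stepb b) (sub B s') end.
Fixpoint height B := match B with BLeaf _ => 0 | BNode l r => (maxn (height l) (height r)).+1 end.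
Fixpoint allseqs n : seq (seq bool) :=
  if n is n'.+1 then [::] :: (map (cons false) (allseqs n') ++ map (cons true) (allseqs n')) else [:: [::]].

Lemma sub_cat B s s' : sub B (s ++ s') = obind (sub^~ s) (sub B s').
Proof. elim: s => [|b s IH] /=; first by case: (sub B s'). by rewrite IH; case: (sub B s'). Qed.

Lemma sub_height B s T : sub B s = Some T -> size s + height T <= height B.
Proof.
elim: s T => [|b s IH] T /=; first by case=> ->.
case E: (sub B s) => [T'|] //= ; case: T' E => // l r E /= [<-].
have := IH _ E => /=; rewrite addSnnS; apply: leq_trans; rewrite leq_add2l.
by case: b; rewrite ltnS ?leq_maxr ?leq_maxl.
Qed.

Lemma mem_cons_map (c d : bool) s A : (c :: s \in map (cons d) A) = (c == d) && (s \in A).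
Proof.
apply/mapP/andP => [[s' Hs' [-> ->]]|[/eqP -> Hs]]; first by rewrite eqxx.
by exists s.
Qed.

Lemma mem_allseqs n s : (s \in allseqs n) = (size s <= n).
Proof.
elim: n s => [|n IH] [|b s] //=.
by rewrite in_cons /= ltnS -IH mem_cat !mem_cons_map; case: b; rewrite /= ?orbF.
Qed.



Definition pos B := [seq s <- allseqs (height B) | isSome (sub B s)].

Lemma mem_pos B s : (s \in pos B) = (isSome (sub B s)).
Proof.
rewrite mem_filter mem_allseqs; case E: (sub B s) => [T|] //=.
by have := sub_height E; apply: leq_trans; apply: leq_addr.
Qed.

Lemma pos_behead B s : s \in pos B -> behead s \in pos B.
Proof. by rewrite !mem_pos; case: s => //= b s; case: (sub B s). Qed.

End BT.

Lemma del_sym_gen (T : finType) (t : rel T) : symmetric t -> forall a b, symmetric (del_edge t a b).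
Proof.
move=> ts a b y z; rewrite /del_edge /= ts.
by case: (y == a); case: (z == b); case: (y == b); case: (z == a).
Qed.

Lemma del_swap_gen (T : finType) (t : rel T) a b : del_edge t a b =2 del_edge t b a.
Proof.
move=> y z; rewrite /del_edge /=.
by case: (y == a); case: (z == b); case: (y == b); case: (z == a).
Qed.

Section BTfacts.
Variable V : finType.
Implicit Types (B T : bt V).

Lemma sub_leaf_nil u s T : sub (BLeaf u) s = Some T -> s = [::].
Proof.
elim: s T => [//|b s IH] T /=; case E: (sub (BLeaf u) s) => [T'|] //=.
have sE := IH _ E; move: E; rewrite sE /= => -[<-] //.
Qed.

Lemma sub_subset T s T' : sub T s = Some T' -> {subset leaves T' <= leaves T}.
Proof.
elim: s T' => [|b s IH] T' /=; first by case=> ->.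
case E: (sub T s) => [[u|l r]|] //= [<-] x Hx; apply: (IH _ E) => /=.
by rewrite mem_cat; case: b Hx => ->; rewrite ?orbT.
Qed.

Lemma sub_one T b : sub T [:: b] = stepb b T.
Proof. by []. Qed.

Lemma mem_leaf_sub T v : v \in leaves T -> exists s, sub T s = Some (BLeaf v).
Proof.
elim: T => [u|l IHl r IHr] /=; first by rewrite inE => /eqP->; exists [::].
rewrite mem_cat => /orP[/IHl|/IHr] [s Hs].
- by exists (s ++ [:: false]); rewrite sub_cat.
- by exists (s ++ [:: true]); rewrite sub_cat.
Qed.

Lemma pos_uniq T s s' v : uniq (leaves T) -> sub T s = Some (BLeaf v) ->
  sub T s' = Some (BLeaf v) -> s = s'.
Proof.
elim: T s s' => [u|l IHl r IHr] s s' /=.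
  by move=> _ /sub_leaf_nil -> /sub_leaf_nil ->.
rewrite cat_uniq => /and3P[Ul Hlr Ur].
case/lastP: s => [//|s1 b]; case/lastP: s' => [//|s1' b'].
rewrite -!cats1 !sub_cat /=.
case: b; case: b' => /= H1 H2.
- by rewrite (IHr _ _ Ur H1 H2).
- have := sub_subset H1; have := sub_subset H2.
  move=> /(_ v); rewrite inE eqxx => /(_ isT) vl /(_ v); rewrite inE eqxx => /(_ isT) vr.
  by move/hasPn: Hlr => /(_ v vr); rewrite vl.
- have := sub_subset H1; have := sub_subset H2.
  move=> /(_ v); rewrite inE eqxx => /(_ isT) vr /(_ v); rewrite inE eqxx => /(_ isT) vl.
  by move/hasPn: Hlr => /(_ v vr); rewrite vl.
- by rewrite (IHl _ _ Ul H1 H2).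
Qed.

End BTfacts.

Section BTree.
Variables (V : finType) (B : bt V).

Definition NB : finType := seq_sub (pos B).

Definition childb (y x : NB) := (behead (val y) == val x) && (val y != [::]).
Definition tb : rel NB := fun x y => childb y x || childb x y.

Lemma root_in : [::] \in pos B. Proof. by rewrite mem_pos. Qed.
Definition rootb : NB := SeqSub root_in.

Definition parentb (x : NB) : NB := SeqSub (pos_behead (ssvalP x)).

Lemma tb_sym : symmetric tb. Proof. by move=> x y; rewrite /tb orbC. Qed.

Lemma tb_irr : irreflexive tb.
Proof.
move=> x; rewrite /tb orbb /childb; case: (val x) => //= b s.
by apply/negP => /andP[/eqP H _]; move: (f_equal size H) => /= /n_Sn.
Qed.

Lemma tb_root (x : NB) : connect tb x rootb.
Proof.
move: {2}(size (val x)) (erefl (size (val x))) => n; elim: n x => [|n IH] x.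
  by case: x => [[|//] Hx] _; apply: eq_connect0; apply: val_inj.
move=> Hs; apply: (@connect_trans _ _ (parentb x)); last first.
  by apply: IH; rewrite /= size_behead Hs.
apply: connect1; rewrite /tb /childb /=; apply/orP; right.
by rewrite eqxx /=; apply/eqP => H; move: Hs; rewrite /= H.
Qed.

Lemma tb_conn x y : connect tb x y.
Proof.
apply: connect_trans (tb_root x) _.
by rewrite (sym_connect_sym tb_sym); apply: tb_root.
Qed.

Lemma headb (s : seq bool) : s != [::] -> s = head false s :: behead s.
Proof. by case: s. Qed.

Lemma desc_inv (x y z : NB) : childb y x -> connect (del_edge tb x y) y z ->
  exists w, val z = w ++ val y.
Proof.
move=> cyx H; apply: (@connect_ind _ _ (fun z : NB => exists w, val z = w ++ val y) _ _ H).
  by exists [::].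
move=> u v /andP[tuv nedge] [w Hu].
case/orP: tuv => /andP[/eqP Hb Hne].
- exists (head false (val v) :: w); rewrite /= -Hu -Hb.
  exact: headb.
- case: w Hu => [|c w] Hu.
    have uy : u = y by apply: val_inj.
    have vx : v = x.
      apply: val_inj; rewrite -Hb Hu /=.
      by move: cyx => /andP[/eqP].
    by move: nedge; rewrite uy vx !eqxx orbT.
  by exists w; rewrite -Hb Hu.
Qed.

Lemma tb_bridge a b : tb a b -> ~~ connect (del_edge tb a b) a b.
Proof.
move=> /orP[cba|cab]; apply/negP => H.
- have H' : connect (del_edge tb a b) b a by rewrite (sym_connect_sym (del_sym_gen tb_sym a b)).
  have [w Hw] := desc_inv cba H'.
  move: cba => /andP[/eqP Hb Hne]; move: (f_equal size Hw) (f_equal size Hb).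
  rewrite size_cat size_behead; have : 0 < size (val b) by case: (val b) Hne.
  move=> H1 H2 H3; move: (f_equal S H3); rewrite prednK // => E.
  by move: (leq_addl (size w) (size (val b))); rewrite -H2 E ltnn.
- rewrite (eq_connect (del_swap_gen tb a b)) in H.
  have [w Hw] := desc_inv cab H.
  move: cab => /andP[/eqP Hb Hne]; move: (f_equal size Hw) (f_equal size Hb).
  rewrite size_cat size_behead; have : 0 < size (val a) by case: (val a) Hne.
  move=> H1 H2 H3; move: (f_equal S H3); rewrite prednK // => E.
  by move: (leq_addl (size w) (size (val a))); rewrite -H2 E ltnn.
Qed.

Lemma tb_tree : is_tree tb.
Proof.
split.
- by apply/card_gt0P; exists rootb.
- by split; [apply: tb_sym | apply: tb_irr].
- exact: tb_conn.
- exact: tb_bridge.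
Qed.


Hypothesis HU : uniq (leaves B).
Hypothesis Hall : forall v, v \in leaves B.

Definition isleafat (s : seq bool) (v : V) : bool :=
  if sub B s is Some (BLeaf u) then u == v else false.

Lemma isleafatP s v : reflect (sub B s = Some (BLeaf v)) (isleafat s v).
Proof.
rewrite /isleafat; case: (sub B s) => [[u|l r]|]; last 2 first.
- by constructor.
- by constructor.
by apply: (iffP eqP) => [->|[]].
Qed.

Lemma sub_pos (x : NB) : isSome (sub B (val x)).
Proof. by rewrite -mem_pos; apply: ssvalP. Qed.

Definition fb (v : V) : NB := odflt rootb [pick z : NB | isleafat (val z) v].

Lemma fb_spec v : sub B (val (fb v)) = Some (BLeaf v).
Proof.
rewrite /fb; case: pickP => [z /isleafatP //|H].
have [s Hs] := mem_leaf_sub (Hall v).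
have sp : s \in pos B by rewrite mem_pos Hs.
by move: (H (SeqSub sp)) => /=; rewrite /isleafat Hs eqxx.
Qed.

Lemma fb_inj : injective fb.
Proof.
move=> v w E; have := fb_spec v; rewrite E fb_spec; by case.
Qed.

Definition stree (z : NB) : bt V := odflt B (sub B (val z)).

Lemma streeE z : sub B (val z) = Some (stree z).
Proof. by rewrite /stree; move: (sub_pos z); case: (sub B (val z)). Qed.

Lemma card_val_sub (A : {set NB}) (l : seq (seq bool)) :
  (forall y, y \in A -> val y \in l) -> #|A| <= size l.
Proof.
move=> H; rewrite cardE -(size_map val); apply: uniq_leq_size.
  by rewrite map_inj_uniq ?enum_uniq //; apply: val_inj.
by move=> s /mapP[y]; rewrite mem_enum => /H Hy ->.
Qed.

Lemma tb_nbr (x y : NB) : tb x y -> val y \in [:: behead (val x); false :: val x; true :: val x].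
Proof.
rewrite /tb /childb => /orP[]/andP[/eqP Hb Hne].
- rewrite (headb Hne) Hb !inE; case: (head false (val y)); rewrite eqxx ?orbT //.
- by rewrite -Hb inE eqxx.
Qed.

Lemma tb_deg (x : NB) : degree tb x <= 3.
Proof. by apply: (@card_val_sub _ [:: behead (val x); false :: val x; true :: val x]) => y; rewrite inE; apply: tb_nbr. Qed.

Lemma child_in (x : NB) (b : bool) T : sub B (val x) = Some T -> isSome (stepb b T) ->
  exists y : NB, val y = b :: val x.
Proof.
move=> Hx Hs; have yp : b :: val x \in pos B by rewrite mem_pos /= Hx.
by exists (SeqSub yp).
Qed.

Lemma tb_leaf (x : NB) : is_leaf tb x <-> exists v, fb v = x.
Proof.
split.
- rewrite /is_leaf; case Ex: (stree x) (streeE x) => [v|l r] Hx.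
    exists v; apply: val_inj; apply: (pos_uniq HU (fb_spec v) Hx).
  have [y0 Hy0] := child_in (b:=false) Hx isT.
  have [y1 Hy1] := child_in (b:=true) Hx isT.
  have : [set y0; y1] \subset [set y | tb x y].
    apply/subsetP => z; rewrite !inE => /orP[]/eqP->; apply/orP; left;
      by rewrite /childb ?Hy0 ?Hy1 /= eqxx.
  move/subset_leq_card; rewrite cards2.
  have -> : (y0 != y1) by apply/negP => /eqP E; move: Hy1; rewrite -E Hy0.
  move=> H1 H2; by move: (leq_trans H1 H2).
- move=> [v <-]; rewrite /is_leaf /degree.
  apply: (@card_val_sub _ [:: behead (val (fb v))]) => y; rewrite inE.
  rewrite /tb /childb => /orP[]/andP[/eqP Hb Hne].
  + have yp := sub_pos y; rewrite (headb Hne) Hb /= fb_spec /= in yp.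
    by [].
  + by rewrite -Hb inE.
Qed.

Lemma nat_aux1 a n : (a + n.+1).+1 = n -> False. Proof. lia. Qed.

Lemma comp_child (x y z : NB) : childb y x ->
  (z \in comp tb y x) <-> exists w, val z = w ++ val y.
Proof.
move=> cyx; split.
  rewrite inE (eq_connect (del_swap_gen tb y x)); exact: desc_inv.
move=> [w]; elim: w z => [|c w IH] z Hz.
  have -> : z = y by apply: val_inj; exact: Hz.
  exact: comp_self.
have zp : w ++ val y \in pos B.
  by have := pos_behead (ssvalP z); rewrite [ssval z]Hz.
have := IH (SeqSub zp) erefl => H; apply: (comp_step H).
rewrite /del_edge /= /tb /childb /= Hz /= eqxx /=.
have Hsy : size (ssval y) = (size (ssval x)).+1.
  move: cyx => /andP[/eqP Hb Hne]; rewrite -Hb size_behead prednK //.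
  by case: (val y) Hne.
apply/negP => /orP[]/andP[/eqP E1 /eqP E2].
- have := f_equal (fun q : NB => size (ssval q)) E2; rewrite /= Hz /= size_cat; rewrite Hsy; apply: nat_aux1.
- have := f_equal (fun q : NB => size (ssval q)) E2; rewrite /= Hz /= size_cat; lia.
Qed.

End BTree.


Lemma bool_aux (a b : bool) : (a -> ~~ b) -> a || b -> a = ~~ b.
Proof. by case: a; case: b => //= /(_ isT). Qed.

Section BWidth.
Variables (V : finType) (E : rel V) (k : nat) (B : bt V).
Hypothesis HU : uniq (leaves B).
Hypothesis Hall : forall v, v \in leaves B.
Hypothesis HE : symmetric E.
Hypothesis Hgood : forall s T, sub B s = Some T ->
  exists C : {set V}, #|C| <= k.+1 /\ cover E [set v | v \in leaves T] C.

Lemma fb_comp (x y : NB B) v : childb y x ->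
  (fb B v \in comp (@tb _ B) y x) = (v \in leaves (stree y)).
Proof.
move=> cyx; apply/idP/idP.
- move/(comp_child HU _ cyx) => [w Hw].
  have := fb_spec Hall v; rewrite Hw sub_cat streeE /= => H.
  by apply: (sub_subset H); rewrite inE.
- move/mem_leaf_sub => [w Hw]; apply/(comp_child HU _ cyx); exists w.
  apply: (pos_uniq HU (fb_spec Hall v)); by rewrite sub_cat streeE.
Qed.

Lemma cut_child (x y : NB B) : childb y x ->
  induced_cut (@tb _ B) (fb B) y x = [set v | v \in leaves (stree y)].
Proof. by move=> cyx; apply/setP => v; rewrite [RHS]inE -(@fb_comp x y v cyx) !inE. Qed.

Lemma cut_parent (x y : NB B) : childb y x ->
  induced_cut (@tb _ B) (fb B) x y = ~: [set v | v \in leaves (stree y)].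
Proof.
move=> cyx; apply/setP => v; rewrite in_setC [in RHS]inE -(@fb_comp x y v cyx) inE.
have txy : tb x y by rewrite /tb cyx.
have := comp_cover (tb_tree B) (fb B v) txy.
have := @comp_cover_disj _ _ (tb_tree B) x y (fb B v) txy.
rewrite !inE.
exact: bool_aux.
Qed.

Lemma bt_bd : branch_decomposition (@tb _ B) (fb B) /\ bd_smwidth E (@tb _ B) (fb B) <= k.+1.
Proof.
split.
  split; [exact: tb_tree | exact: tb_deg | exact: (fb_inj Hall) | exact: (tb_leaf HU Hall)].
apply/bigmax_leqP => [[x y]] /= /orP[cyx|cxy].
- have [C [Ck HC]] := Hgood (streeE y).
  rewrite (cut_parent cyx); apply: (sm_cover (cover_compl HE HC) Ck).
- have [C [Ck HC]] := Hgood (streeE x).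
  rewrite (cut_child cxy); apply: (sm_cover HC Ck).
Qed.

End BWidth.

Section Build.
Variables (V : finType) (E : rel V) (k : nat).

Definition good (S : {set V}) := exists C : {set V}, #|C| <= k.+1 /\ cover E S C.
Definition allgood (B : bt V) := forall s T, sub B s = Some T -> good [set v | v \in leaves T].
Definition oleaves (ob : option (bt V)) := if ob is Some B then leaves B else [::].
Definition oallgood (ob : option (bt V)) := if ob is Some B then allgood B else True.
Definition II (S : {set V}) :=
  exists ob, [/\ uniq (oleaves ob), oleaves ob =i S & oallgood ob].

Lemma sub_node (l r : bt V) s T : sub (BNode l r) s = Some T ->
  (s = [::] /\ T = BNode l r) \/ exists s1, sub l s1 = Some T \/ sub r s1 = Some T.
Proof.
case/lastP: s => [[<-]|s1 b]; first by left.
rewrite -cats1 sub_cat /= => H; right; exists s1; by case: b H; [right|left].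
Qed.

Lemma II0 : II set0.
Proof. by exists None; split => // v; rewrite inE. Qed.

Lemma II1 v : II [set v].
Proof.
exists (Some (BLeaf v)); split => //=.
  by move=> w; rewrite !inE.
move=> s T /[dup] /sub_leaf_nil -> [<-] /=; exists [set v]; split; first by rewrite cards1.
by move=> u w; rewrite !inE => /eqP -> _ _; rewrite eqxx.
Qed.

Lemma II_join (S1 S2 : {set V}) : (forall v, v \in S1 -> v \in S2 -> False) ->
  II S1 -> II S2 -> good (S1 :|: S2) -> II (S1 :|: S2).
Proof.
move=> Hd [[B1|] [U1 L1 G1]] [[B2|] [U2 L2 G2]] Hg.
- exists (Some (BNode B1 B2)); split => /=.
  + rewrite cat_uniq U1 U2 /= andbT; apply/hasPn => v; rewrite L2 L1 => H2.
    by apply/negP => H1; apply: Hd H1 H2.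
  + by move=> v; rewrite mem_cat L1 L2 inE.
  + move=> s T /sub_node [[_ ->]|[s1 [H|H]]].
    * have -> : [set v | v \in leaves (BNode B1 B2)] = S1 :|: S2.
        by apply/setP => v; rewrite !inE /= mem_cat L1 L2.
      exact: Hg.
    * exact: G1 H.
    * exact: G2 H.
- have E1 : S1 :|: S2 = S1 by apply/setP => v; rewrite inE -L2 /= orbF.
  by rewrite E1; exists (Some B1); split.
- have E1 : S1 :|: S2 = S2 by apply/setP => v; rewrite inE -L1.
  by rewrite E1; exists (Some B2); split.
- have E1 : S1 :|: S2 = set0 by apply/setP => v; rewrite !inE -L1 -L2.
  by rewrite E1; exists None; split => // v; rewrite inE.
Qed.

End Build.

Section Big.
Variables (V : finType) (E : rel V) (k : nat).

Lemma II_big (X : finType) (Blk : X -> {set V}) (r : seq X) : uniq r ->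
  (forall i, II E k (Blk i)) ->
  (forall i j, i != j -> forall v, v \in Blk i -> v \in Blk j -> False) ->
  (forall r', good E k (\bigcup_(i <- r') Blk i)) -> II E k (\bigcup_(i <- r) Blk i).
Proof.
move=> Ur HI Hd Hg; elim: r Ur => [_|i r IH] /=; first by rewrite big_nil; apply: II0.
move=> /andP[ir Ur]; rewrite big_cons; apply: II_join; [|exact: HI|exact: IH Ur|by have := Hg (i :: r); rewrite big_cons].
move=> v vi; rewrite bigcup_seq => /bigcupP[j jr vj].
apply: (Hd i j _ v vi vj); apply/negP => /eqP ij; by move: ir; rewrite ij jr.
Qed.

Variables (N : finType) (t : rel N) (bag : N -> {set V}).
Hypothesis Htd : tree_decomposition E t bag k.
Variable x0 : N.

Lemma Ht : is_tree t. Proof. by case: Htd. Qed.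

Definition mu v := odflt x0 [pick x | v \in bag x].

Lemma mu_bag v : v \in bag (mu v).
Proof.
rewrite /mu; case: pickP => [//|H]; case: Htd => _ H2 _ _ _.
by have [x Hx] := H2 v; move: (H x); rewrite Hx.
Qed.

Lemma stay c x v z z' : z \in comp t c x -> v \notin bag x -> v \in bag z -> v \in bag z' ->
  z' \in comp t c x.
Proof.
move=> Hz vx vz vz'; case: Htd => _ _ _ H4 _.
apply: (@connect_ind _ _ (fun y => y \in comp t c x) _ _ (H4 v z z' vz vz')) => // a b.
move=> /andP[/andP[tab va] vb] Ha; apply: (comp_step Ha).
rewrite /del_edge /= tab /=; apply/negP => /orP[]/andP[/eqP e1 /eqP e2].
- by move: vb; rewrite e2 (negbTE vx).
- by move: va; rewrite e1 (negbTE vx).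
Qed.

Definition W x p := [set v | mu v \in comp t x p].

Definition Blk x p (i : V + N) : {set V} :=
  match i with
  | inl v => if mu v == x then [set v] else set0
  | inr c => if t x c && (c != p) then W c x else set0
  end.

Lemma node_good x p r' : good E k (\bigcup_(i <- r') Blk x p i).
Proof.
exists (bag x); split; first by case: Htd => _ _ _ _ /(_ x).
move=> u w; rewrite bigcup_seq => /bigcupP[i ir ui] wU Euw.
case: (boolP (u \in bag x)) => //= ux; case: (boolP (w \in bag x)) => //= wx.
exfalso; case: i ir ui => [v|c] ir /=.
  case: ifP => [/eqP mux|]; last by rewrite inE.
  by rewrite inE => /eqP uv; move: ux; rewrite uv -mux mu_bag.
case: ifP => [/andP[txc cp]|]; last by rewrite inE.
rewrite inE => Hu.
case: Htd => _ _ /(_ u w Euw) [y /andP[uy wy]] _ _.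
have Hy := stay Hu ux (mu_bag u) uy.
have Hw := stay Hy wx wy (mu_bag w).
move/negP: wU; apply; apply/bigcupP; exists (inr c) => //=.
by rewrite txc cp inE.
Qed.

Lemma memW v x p : (v \in W x p) = (mu v \in comp t x p).
Proof. by rewrite [in LHS]inE. Qed.

Lemma W_II x p : II E k (W x p).
Proof.
move: {2}#|comp t x p| (leqnn #|comp t x p|) => n; elim: n x p => [|n IH] x p Hn.
  by move: Hn; rewrite leqn0 cards_eq0 => /eqP H; move: (comp_self t x p); rewrite H inE.
have -> : W x p = \bigcup_(i <- enum [set: (V + N)%type]) Blk x p i.
  apply/setP => v; rewrite bigcup_seq; apply/idP/bigcupP.
  - rewrite memW => /(comp_split Ht) [mx|[c [txc cp Hc]]].
      by exists (inl v); rewrite ?mem_enum ?inE //= mx eqxx inE.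
    by exists (inr c); rewrite ?mem_enum ?inE //= txc cp memW.
  - move=> [[w|c] _ /=].
      case: ifP => [/eqP mx|]; last by rewrite inE.
      by rewrite in_set1 => /eqP ->; rewrite memW mx; apply: comp_self.
    case: ifP => [/andP[txc cp]|]; last by rewrite inE.
    by rewrite !memW => Hc; apply: (comp_sub Ht txc cp).
apply: II_big; first exact: enum_uniq.
- case=> [v|c] /=.
    by case: ifP => _; [apply: II1 | apply: II0].
  case: ifP => [/andP[txc cp]|_]; last exact: II0.
  apply: IH; rewrite -ltnS; apply: leq_trans Hn; exact: (comp_lt Ht txc cp).
- move=> [v|c] [w|d] ij u /=.
  + case: ifP => _; last by rewrite inE.
    case: ifP => _; last by move=> _; rewrite inE.
    by rewrite !inE => /eqP -> /eqP wv; move: ij; rewrite wv eqxx.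
  + case: ifP => [/eqP mx|]; last by rewrite inE.
    case: ifP => [/andP[txd dp]|]; last by move=> _ _; rewrite inE.
    rewrite in_set1 memW => /eqP -> Hd; move: (bridge Ht (etrans (tsym Ht d x) txd)).
    by rewrite mx in Hd; rewrite Hd.
  + case: ifP => [/andP[txc cp]|]; last by rewrite inE.
    case: ifP => [/eqP mx|]; last by move=> _ _; rewrite inE.
    rewrite in_set1 memW => Hc /eqP uw; move: (bridge Ht (etrans (tsym Ht c x) txc)).
    by rewrite uw mx in Hc; rewrite Hc.
  + case: ifP => [/andP[txc cp]|]; last by rewrite inE.
    case: ifP => [/andP[txd dp]|]; last by move=> _ _; rewrite inE.
    rewrite !memW => Hc Hd.
    have cd : c != d by apply/negP => /eqP cd; move: ij; rewrite cd eqxx.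
    by move: (comp_disj Ht txc txd cd Hc); rewrite Hd.
- move=> r'; exact: node_good.
Qed.

End Big.

Theorem part1 (V : finType) (E : rel V) (k : nat) : is_graph E -> tw_le E k -> smw_le E k.+1.
Proof.
move=> [Es _] [N [t [bag Htd]]].
case: (posnP #|V|) => [V0|Vpos]; first by left.
right; have [v0 _] : exists v0 : V, True by case/card_gt0P: Vpos => v _; exists v.
have [x0 _] : exists x : N, True by case: Htd => _ /(_ v0) [x _] _ _ _; exists x.
have [[B|] [U L G]] := W_II Htd x0 x0 x0.
  have Hall : forall v, v \in leaves B.
    by move=> v; rewrite L memW (comp_root (Ht Htd)) inE.
  exists (NB B), (@tb _ B), (fb B); exact: (bt_bd U Hall Es G).
by move: (L v0); rewrite memW (comp_root (Ht Htd)) inE.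
Qed.

Section KE.
Variable c : nat.

Lemma ke_ext (T : finType) (E E' : rel T) (l l' : T -> 'I_c) :
  k_expr E l -> E' =2 E -> l' =1 l -> k_expr E' l'.
Proof.
move=> H HE Hl; apply: (@ke_iso c T T E l E' l' id) => //.
by exists id.
Qed.

Lemma ke_relabel_seq (T : finType) (E : rel T) (l : T -> 'I_c) (g : 'I_c -> 'I_c) (s : seq 'I_c) :
  k_expr E l -> (forall i, i \in s -> g i \notin s) ->
  k_expr E (fun x => if l x \in s then g (l x) else l x).
Proof.
elim: s l => [|i s IH] l H Hg.
  by apply: ke_ext H _ _ => // x; rewrite in_nil.
have H1 := ke_relabel i (g i) H.
have Hg' : forall j, j \in s -> g j \notin s.
  move=> j js; have := Hg j; rewrite inE js orbT => /(_ isT); rewrite inE; by case/norP.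
apply: ke_ext (IH _ H1 Hg') _ _ => // x /=.
have gi : g i \notin i :: s by apply: Hg; rewrite inE eqxx.
case: (boolP (l x == i)) => [/eqP ->|lxi].
  rewrite inE eqxx /=; move: gi; rewrite inE negb_or => /andP[_ /negbTE ->]; done.
by rewrite inE (negbTE lxi).
Qed.

Definition joinrel (T : finType) (E : rel T) (l : T -> 'I_c) (ps : seq ('I_c * 'I_c)) : rel T :=
  fun x y => E x y || has (fun p => ((l x == p.1) && (l y == p.2)) || ((l x == p.2) && (l y == p.1))) ps.

Lemma ke_join_seq (T : finType) (E : rel T) (l : T -> 'I_c) ps :
  k_expr E l -> (forall p, p \in ps -> p.1 != p.2) -> k_expr (joinrel E l ps) l.
Proof.
elim: ps E => [|p ps IH] E H Hp.
  by apply: ke_ext H _ _ => // x y; rewrite /joinrel /= orbF.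
have H1 := ke_join H (Hp p (mem_head _ _)).
have Hp' : forall q, q \in ps -> q.1 != q.2 by move=> q qs; apply: Hp; rewrite inE qs orbT.
apply: ke_ext (IH _ H1 Hp') _ _ => // x y; rewrite /joinrel /=.
by rewrite !orbA.
Qed.

End KE.

Section Cls.
Variables (V : finType) (E : rel V).

Definition nbh (A : {set V}) (x : V) : {set V} := [set z | E x z & z \notin A].
Definition cls (A : {set V}) := [set nbh A x | x in A].
Definition ER (A : {set V}) : rel {x : V | x \in A} := fun x y => E (val x) (val y).
Definition Q (c : nat) (A : {set V}) := forall l : {x : V | x \in A} -> 'I_c,
  (forall x y : {x : V | x \in A}, nbh A (val x) = nbh A (val y) -> l x = l y) -> k_expr (@ER A) l.

Lemma Q0 c : Q c set0.
Proof.
move=> l _; have b : bijective (fun v : void => of_void {x : V | x \in set0} v).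
  apply: inj_card_bij; first by case.
  by rewrite card_sig card_void leqn0; apply/eqP; apply: eq_card0 => x; rewrite !inE.
apply: (ke_iso (ke_empty (fun v : void => of_void 'I_c v)) b); by case.
Qed.

Lemma Q1 c v : irreflexive E -> Q c [set v].
Proof.
move=> Ei l _; have vv : v \in [set v] by rewrite inE.
pose g := fun _ : unit => (exist _ v vv : {x : V | x \in [set v]}).
have b : bijective g.
  apply: inj_card_bij; first by case; case.
  by rewrite card_unit card_sig cards1.
apply: (ke_iso (ke_vertex (l (g tt))) b); first by case; case; rewrite /ER /= Ei.
by case.
Qed.


Lemma nbh_eq_split A x y : is_split E A -> x \in A -> y \in A ->
  nbh A x != set0 -> nbh A y != set0 -> nbh A x = nbh A y.
Proof.
move=> /and3P[_ _ /forallP H] xA yA nx ny.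
move: (H x); rewrite xA /= => /forallP /(_ y); rewrite yA /= => /implyP H1.
have ex : forall w, nbh A w != set0 -> [exists z in ~: A, E w z].
  move=> w /set0Pn [z]; rewrite inE => /andP[wz zA]; apply/existsP; exists z.
  by rewrite inE zA wz.
move: (H1 (introT andP (conj (ex _ nx) (ex _ ny)))) => /forallP H2.
apply/setP => z; rewrite !inE; case: (boolP (z \in A)) => zA; rewrite ?andbF //= !andbT.
by move: (H2 z); rewrite inE zA /= => /eqP.
Qed.

Lemma cls_bound k A : sm E A <= k -> #|cls A| <= 2 ^ k + k + 2.
Proof.
rewrite /sm; case: ifP => Hs Hk.
  apply: leq_trans (_ : 2 <= _); last by rewrite addn2 ltnS leq_addr.
  case: (pickP [pred x | (x \in A) && (nbh A x != set0)]) => [x0 /andP[x0A nx0]|H].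
    apply: leq_trans (_ : #|[set set0; nbh A x0]| <= 2); last by rewrite cards2; case: (_ != _).
    apply: subset_leq_card; apply/subsetP => S /imsetP[y yA ->]; rewrite !inE.
    case: (boolP (nbh A y == set0)) => //= ny; apply/eqP; exact: nbh_eq_split.
  apply: leq_trans (_ : #|[set (set0 : {set V})]| <= 2); last by rewrite cards1.
  apply: subset_leq_card; apply/subsetP => S /imsetP[y yA ->]; rewrite !inE.
  by move: (H y); rewrite /= yA /= => /negbFE.
have H0 : cut_matching E A set0.
  by apply/andP; split; apply/forallP => p; rewrite inE.
case: (arg_maxnP (fun M : {set V * V} => #|M|) H0) => M0 HM0 Hmax.
have M0k : #|M0| <= k by apply: leq_trans Hk; apply: leq_bigmax_cond.
pose S1 := [set p.1 | p in M0]; pose S2 := [set p.2 | p in M0].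
have S1k : #|S1| <= k by apply: leq_trans (leq_imset_card _ _) M0k.
have S2k : #|S2| <= k by apply: leq_trans (leq_imset_card _ _) M0k.
have maxl : forall x z, x \in A -> z \notin A -> E x z -> (x \in S1) || (z \in S2).
  move=> x z xA zA Exz; case: (boolP ((x \in S1) || (z \in S2))) => // /norP[xS1 zS2]; exfalso.
  have xzM : (x, z) \notin M0 by apply/negP => H; move: xS1; rewrite (imset_f (fun p : V * V => p.1) H).
  have Hc : cut_matching E A ((x, z) |: M0).
    move: HM0 => /andP[/forallP C1 /forallP C2]; apply/andP; split.
      apply/forallP => p; rewrite !inE; apply/implyP => /orP[/eqP->|pM]; first by rewrite /= xA zA Exz.
      by move: (C1 p); rewrite pM.
    apply/forallP => p; apply/implyP; rewrite !inE => Hp; apply/forallP => q; apply/implyP; rewrite !inE => Hq.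
    case/orP: Hp => [/eqP ->|pM]; case/orP: Hq => [/eqP ->|qM]; first by apply/implyP => _.
    + apply/implyP => /= /orP[/eqP e|/eqP e]; exfalso.
        by move: xS1; rewrite e (imset_f (fun p : V * V => p.1) qM).
      by move: zS2; rewrite e (imset_f (fun p : V * V => p.2) qM).
    + apply/implyP => /= /orP[/eqP e|/eqP e]; exfalso.
        by move: xS1; rewrite -e (imset_f (fun p : V * V => p.1) pM).
      by move: zS2; rewrite -e (imset_f (fun p : V * V => p.2) pM).
    + by move: (C2 p); rewrite pM /= => /forallP /(_ q); rewrite qM.
  by move: (Hmax _ Hc); rewrite /= cardsU1 xzM add1n ltnn.
apply: leq_trans (_ : #|powerset S2 :|: [set nbh A y | y in S1]| <= _).
  apply: subset_leq_card; apply/subsetP => S /imsetP[y yA ->]; rewrite inE.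
  case: (boolP (y \in S1)) => yS1; first by rewrite (imset_f (nbh A) yS1) orbT.
  rewrite inE; apply/orP; left; apply/subsetP => z; rewrite inE => /andP[Eyz zA].
  by move: (maxl y z yA zA Eyz); rewrite (negbTE yS1).
rewrite cardsU; apply: leq_trans (leq_subr _ _) _.
rewrite card_powerset -addnA leq_add //; first by apply: leq_pexp2l.
by apply: leq_trans (leq_imset_card _ _) _; apply: leq_trans S1k _; apply: leq_addr.
Qed.

End Cls.

Section Union.
Variables (V : finType) (E : rel V) (m c : nat).
Hypothesis HE : symmetric E.
Hypothesis Hmc : 3 * m <= c.
Variable d0 : 'I_c.
Variables (A1 A2 : {set V}).
Hypothesis Hdisj : forall v, v \in A1 -> v \in A2 -> False.
Hypothesis HQ1 : Q E c A1.
Hypothesis HQ2 : Q E c A2.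
Hypothesis HC1 : #|cls E A1| <= m.
Hypothesis HC2 : #|cls E A2| <= m.
Hypothesis HC : #|cls E (A1 :|: A2)| <= m.

Local Notation A := (A1 :|: A2).
Local Notation T1 := {x : V | x \in A1}.
Local Notation T2 := {x : V | x \in A2}.
Local Notation TA := {x : V | x \in A}.

Lemma nbh_sub (B B' : {set V}) x : B \subset B' -> nbh E B' x = [set z in nbh E B x | z \notin B'].
Proof.
move=> /subsetP sB; apply/setP => z; rewrite !inE.
case: (boolP (z \in B')) => zB'; rewrite ?andbF //= !andbT.
have zB : z \notin B by apply/negP => zB; move: (sB z zB); rewrite (negbTE zB').
by rewrite zB andbT.
Qed.

Lemma class_arg a u b w : a \in A1 -> u \in A1 -> b \in A2 -> w \in A2 ->
  nbh E A1 a = nbh E A1 u -> nbh E A2 b = nbh E A2 w -> E a b -> E u w.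
Proof.
move=> aA uA bA wA H1 H2 Eab.
have bn : b \in nbh E A1 a by rewrite inE Eab /=; apply/negP => /Hdisj; apply.
move: bn; rewrite H1 inE => /andP[Eub _].
have un : u \in nbh E A2 b by rewrite inE HE Eub /=; apply/negP => /(Hdisj uA).
by move: un; rewrite H2 inE HE => /andP[].
Qed.

Lemma inA1 x : x \in A1 -> x \in A. Proof. by rewrite inE => ->. Qed.
Lemma inA2 x : x \in A2 -> x \in A. Proof. by rewrite inE => ->; rewrite orbT. Qed.

Definition phi (y : T1 + T2) : TA :=
  match y with inl u => exist _ (val u) (inA1 (valP u)) | inr w => exist _ (val w) (inA2 (valP w)) end.

Lemma phi_inj : injective phi.
Proof.
case=> [[u Hu]|[w Hw]] [[u' Hu']|[w' Hw']] /= [] E0; subst.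
- by congr inl; apply: val_inj.
- by exfalso; apply: (Hdisj Hu Hw').
- by exfalso; apply: (Hdisj Hu' Hw).
- by congr inr; apply: val_inj.
Qed.

Lemma phi_bij : bijective phi.
Proof.
apply: inj_card_bij; first exact: phi_inj.
rewrite card_sum !card_sig.
have cs : forall B : {set V}, #|[pred x | x \in B]| = #|B| by move=> B; apply: eq_card.
by rewrite !cs cardsU leq_subr.
Qed.


Section WithL.
Variable l : TA -> 'I_c.
Hypothesis Hl : forall x y : TA, nbh E A (val x) = nbh E A (val y) -> l x = l y.
Variable a0 : TA.

Definition Img := [set l x | x : TA].

Lemma Img_card : #|Img| <= m.
Proof.
pose h S := l (odflt a0 [pick x : TA | nbh E A (val x) == S]).
apply: leq_trans HC; apply: leq_trans (leq_imset_card h _).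
apply: subset_leq_card; apply/subsetP => i /imsetP[x _ ->].
have Hx : nbh E A (val x) \in cls E A by apply: imset_f; exact: (valP x).
apply/imsetP; exists (nbh E A (val x)) => //.
rewrite /h; case: pickP => [x' /eqP Hx'|H]; first by apply: Hl.
by move: (H x); rewrite eqxx.
Qed.

Definition F := enum (~: Img).

Lemma F_size : 2 * m <= size F.
Proof.
rewrite /F -cardE; have := cardsC Img; rewrite card_ord => H.
have := Img_card; move: Hmc H; lia.
Qed.

Lemma F_uniq : uniq F. Proof. exact: enum_uniq. Qed.

Definition idx1 (x : T1) := index (nbh E A1 (val x)) (enum (cls E A1)).
Definition idx2 (x : T2) := index (nbh E A2 (val x)) (enum (cls E A2)).

Lemma idx1_lt x : idx1 x < m.
Proof.
apply: leq_trans HC1; rewrite cardE /idx1 index_mem mem_enum.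
by apply: imset_f; exact: (valP x).
Qed.

Lemma idx2_lt x : idx2 x < m.
Proof.
apply: leq_trans HC2; rewrite cardE /idx2 index_mem mem_enum.
by apply: imset_f; exact: (valP x).
Qed.

Definition l1 (x : T1) := nth d0 F (idx1 x).
Definition l2 (x : T2) := nth d0 F (m + idx2 x).

Lemma lt1 x : idx1 x < size F.
Proof. apply: leq_trans (idx1_lt x) _; apply: leq_trans F_size; lia. Qed.
Lemma lt2 x : m + idx2 x < size F.
Proof. apply: leq_trans F_size; have := idx2_lt x; lia. Qed.

Lemma l1_F x : l1 x \in F. Proof. exact: mem_nth (lt1 x). Qed.
Lemma l2_F x : l2 x \in F. Proof. exact: mem_nth (lt2 x). Qed.

Lemma l1_inj x x' : l1 x = l1 x' -> nbh E A1 (val x) = nbh E A1 (val x').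
Proof.
move/eqP; rewrite /l1 nth_uniq ?lt1 ?F_uniq // /idx1 => /eqP H.
have m1 : nbh E A1 (val x) \in enum (cls E A1) by rewrite mem_enum; apply: imset_f; exact: (valP x).
have m2 : nbh E A1 (val x') \in enum (cls E A1) by rewrite mem_enum; apply: imset_f; exact: (valP x').
by rewrite -(nth_index set0 m1) -(nth_index set0 m2) H.
Qed.

Lemma l2_inj x x' : l2 x = l2 x' -> nbh E A2 (val x) = nbh E A2 (val x').
Proof.
move/eqP; rewrite /l2 nth_uniq ?lt2 ?F_uniq // eqn_add2l /idx2 => /eqP H.
have m1 : nbh E A2 (val x) \in enum (cls E A2) by rewrite mem_enum; apply: imset_f; exact: (valP x).
have m2 : nbh E A2 (val x') \in enum (cls E A2) by rewrite mem_enum; apply: imset_f; exact: (valP x').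
by rewrite -(nth_index set0 m1) -(nth_index set0 m2) H.
Qed.

Lemma l12 x y : (l1 x == l2 y) = false.
Proof.
rewrite /l1 /l2 nth_uniq ?lt1 ?lt2 ?F_uniq //.
have := idx1_lt x; apply: contraTF => /eqP ->; rewrite -ltnNge; apply: leq_addr.
Qed.


Definition lab := sum_lab l1 l2.
Definition ps := [seq (l1 p.1, l2 p.2) | p <- enum [set p : T1 * T2 | E (val p.1) (val p.2)]].
Definition g i := if [pick y | lab y == i] is Some y then l (phi y) else l a0.

Lemma g_notF i : g i \notin F.
Proof.
rewrite /F mem_enum inE negbK /g.
by case: pickP => [y _|_]; apply: imset_f.
Qed.

Lemma lab_F y : lab y \in F.
Proof. by case: y => [u|w]; [apply: l1_F | apply: l2_F]. Qed.

Lemma l_phi y y' : lab y = lab y' -> l (phi y) = l (phi y').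
Proof.
have s1 : A1 \subset A by apply/subsetP => x; apply: inA1.
have s2 : A2 \subset A by apply/subsetP => x; apply: inA2.
case: y => [u|w]; case: y' => [u'|w'] /= H; apply: Hl => /=.
- by rewrite !(nbh_sub _ s1) (l1_inj H).
- by move: (l12 u w'); rewrite H eqxx.
- by move: (l12 u' w); rewrite H eqxx.
- by rewrite !(nbh_sub _ s2) (l2_inj H).
Qed.

Lemma g_lab y : g (lab y) = l (phi y).
Proof.
rewrite /g; case: pickP => [y' /eqP H|H]; first exact: l_phi.
by move: (H y); rewrite eqxx.
Qed.

Lemma Hps p : p \in ps -> p.1 != p.2.
Proof. by move=> /mapP[[a b] _ ->] /=; rewrite l12. Qed.

Lemma ps_mem (u : T1) (w : T2) :
  has (fun p => (l1 u == p.1) && (l2 w == p.2)) ps = E (val u) (val w).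
Proof.
apply/hasP/idP => [[p /mapP[[a b] Hab ->]] /= /andP[/eqP H1 /eqP H2]|Euw].
  move: Hab; rewrite mem_enum inE /= => Eab.
  apply: (class_arg (valP a) (valP u) (valP b) (valP w)) => //.
    exact: l1_inj.
  by apply: l2_inj.
exists (l1 u, l2 w); last by rewrite !eqxx.
by apply/mapP; exists (u, w); rewrite // mem_enum inE.
Qed.

Lemma union_main : k_expr (@ER _ E A) l.
Proof.
have K1 : k_expr (@ER _ E A1) l1 by apply: HQ1 => x y H; rewrite /l1 /idx1 H.
have K2 : k_expr (@ER _ E A2) l2 by apply: HQ2 => x y H; rewrite /l2 /idx2 H.
have K := ke_union K1 K2.
have K' := ke_join_seq K Hps.
have Hg : forall i, i \in F -> g i \notin F by move=> i _; apply: g_notF.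
have K'' := ke_relabel_seq K' Hg.
apply: (ke_iso K'' phi_bij).
- move=> y y'; rewrite /joinrel /ER /=.
  case: y => [u|w]; case: y' => [u'|w'] /=.
  + rewrite -[LHS]orbF; congr orb; apply/esym/hasP => [[p /mapP[[a b] _ ->]]] /=.
    case/orP => [/andP[_ /eqP H]|/andP[/eqP H _]].
      by move: (l12 u' b); rewrite H eqxx.
    by move: (l12 u b); rewrite H eqxx.
  + rewrite -ps_mem /=; apply: eq_in_has => p /mapP[[a b] _ ->] /=.
    case: (boolP (l1 u == l2 b)) => H; first by move: (l12 u b); rewrite H.
    by rewrite /= orbF.
  + rewrite HE -ps_mem /=; apply: eq_in_has => p /mapP[[a b] _ ->] /=.
    case: (boolP (l2 w == l1 a)) => H; first by move: (l12 a w); rewrite eq_sym H.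
    by rewrite /= andbC.
  + rewrite -[LHS]orbF; congr orb; apply/esym/hasP => [[p /mapP[[a b] _ ->]]] /=.
    case/orP => [/andP[/eqP H _]|/andP[_ /eqP H]].
      by move: (l12 a w); rewrite -H eqxx.
    by move: (l12 a w'); rewrite -H eqxx.
- by move=> y; rewrite lab_F g_lab.
Qed.

End WithL.


Lemma empty_ke (T : finType) (R : rel T) (l : T -> 'I_c) : #|T| = 0 -> irreflexive R -> k_expr R l.
Proof.
move=> T0 _; have b : bijective (fun v : void => of_void T v).
  by apply: inj_card_bij; [case | rewrite card_void T0].
apply: (ke_iso (ke_empty (fun v : void => of_void 'I_c v)) b); by case.
Qed.

Lemma union_Q : Q E c A.
Proof.
move=> l Hl; case: (pickP (fun _ : TA => true)) => [a0 _|H].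
  exact: (union_main Hl a0).
apply: empty_ke; last by move=> x; move: (H x).
by apply: eq_card0 => x; move: (H x).
Qed.

End Union.

Section Rec.
Variables (V : finType) (E : rel V) (k : nat).
Hypothesis HE : symmetric E.
Hypothesis Eirr : irreflexive E.
Variables (N : finType) (t : rel N) (f : V -> N).
Hypothesis Hbd : branch_decomposition t f.
Hypothesis Hw : bd_smwidth E t f <= k.

Let m := 2 ^ k + k + 2.
Let c := 3 * m.
Lemma c_pos : 0 < c. Proof. by rewrite /c /m; rewrite muln_gt0 addn2. Qed.
Let d0 : 'I_c := Ordinal c_pos.

Lemma Ht_bd : is_tree t. Proof. by case: Hbd. Qed.

Lemma cut_cls a b : t a b -> #|cls E (induced_cut t f a b)| <= m.
Proof.
move=> tab; apply: cls_bound; apply: leq_trans Hw.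
exact: (@leq_bigmax_cond _ (fun p : N * N => t p.1 p.2) (fun p => sm E (induced_cut t f p.1 p.2)) (a, b)).
Qed.

Lemma cutE a b v : (v \in induced_cut t f a b) = (f v \in comp t a b).
Proof. by rewrite !inE. Qed.

Lemma cut_Q a b : t a b -> Q E c (induced_cut t f a b).
Proof.
move: {2}#|comp t a b| (leqnn #|comp t a b|) => n; elim: n a b => [|n IH] a b Hn tab.
  by move: Hn; rewrite leqn0 cards_eq0 => /eqP H; move: (comp_self t a b); rewrite H inE.
case: Hbd => _ Hdeg finj Hleaf.
case: (boolP (is_leaf t a)) => la.
  have [v fv] := (Hleaf a).1 la.
  have -> : induced_cut t f a b = [set v].
    apply/setP => w; rewrite cutE (comp_leaf la tab) !inE -fv.
    by apply/eqP/eqP => [/finj|->].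
  exact: Q1.
have anf : forall v, f v != a by move=> v; apply/negP => /eqP fv; move: la; rewrite (Hleaf a).2 //; exists v.
pose Ch := [set y | t a y] :\ b.
have memCh : forall y, (y \in Ch) = (y != b) && t a y by move=> y; rewrite !inE.
have cutCh : forall v, (v \in induced_cut t f a b) = [exists y in Ch, f v \in comp t y a].
  move=> v; rewrite cutE; apply/idP/existsP.
    move/(comp_split Ht_bd) => [fa|[y [tay yb Hy]]]; first by move: (anf v); rewrite fa eqxx.
    by exists y; rewrite Hy andbT !inE tay yb.
  move=> [y /andP[yCh Hy]]; rewrite memCh in yCh; case/andP: yCh => yb tay.
  exact: (comp_sub Ht_bd tay yb).
have Hlt : forall y, y \in Ch -> t y a /\ Q E c (induced_cut t f y a).
  move=> y; rewrite memCh => /andP[yb tay]; split; first by rewrite (tsym Ht_bd).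
  apply: IH; last by rewrite (tsym Ht_bd).
  rewrite -ltnS; apply: leq_trans Hn; exact: (comp_lt Ht_bd tay yb).
have Chc : #|Ch| = (degree t a).-1.
  by rewrite /degree (cardsD1 b [set y | t a y]) inE tab.
have dg : 1 < degree t a by rewrite ltnNge.
have := Hdeg a; move: Chc dg; case: (degree t a) => [|[|[|[|d]]]] //= Chc _ _.
- have [y Chy] : exists y, Ch = [set y] by apply/cards1P; rewrite Chc.
  have -> : induced_cut t f a b = induced_cut t f y a.
    by apply/setP => v; rewrite cutCh Chy cutE; apply/existsP/idP => [[z /andP[]]|H];
      [rewrite inE => /eqP -> | exists y; rewrite inE eqxx].
  have yCh : y \in Ch by rewrite Chy inE.
  exact: (Hlt y yCh).2.
- have [y [z [yz Chyz]]] : exists y z, y != z /\ Ch = [set y; z] by apply/cards2P; rewrite Chc.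
  have yCh : y \in Ch by rewrite Chyz !inE eqxx.
  have zCh : z \in Ch by rewrite Chyz !inE eqxx orbT.
  have Ecut : induced_cut t f a b = induced_cut t f y a :|: induced_cut t f z a.
    apply/setP => v; rewrite cutCh inE !cutE; apply/existsP/orP.
      by move=> [w /andP[]]; rewrite Chyz !inE => /orP[]/eqP -> H; [left|right].
    by move=> [H|H]; [exists y | exists z]; rewrite ?yCh ?zCh.
  have Cab := cut_cls tab; rewrite Ecut in Cab *.
  have [tya Qy] := Hlt y yCh; have [tza Qz] := Hlt z zCh.
  apply: (@union_Q _ E m c HE (leqnn _) d0) => //.
  + move=> v; rewrite !cutE => Hy Hz.
    have tay : t a y by rewrite (tsym Ht_bd).
    have taz : t a z by rewrite (tsym Ht_bd).
    by move: (comp_disj Ht_bd tay taz yz Hy); rewrite Hz.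
  + exact: cut_cls.
  + exact: cut_cls.
Qed.


Lemma cls_setT : #|cls E setT| <= m.
Proof.
apply: leq_trans (_ : #|[set (set0 : {set V})]| <= _); last by rewrite cards1 /m addn2.
apply: subset_leq_card; apply/subsetP => S /imsetP[x _ ->]; rewrite !inE.
by apply/eqP/setP => z; rewrite !inE andbF.
Qed.

Lemma Q_setT : Q E c setT.
Proof.
have Htr := Ht_bd.
case: (pickP (fun _ : V => true)) => [v0 _|H0]; last first.
  have -> : (setT : {set V}) = set0 by apply/setP => x; move: (H0 x); rewrite !inE.
  exact: Q0.
case: (pickP (fun w : V => w != v0)) => [w wv|H1]; last first.
  have -> : (setT : {set V}) = [set v0].
    by apply/setP => x; move: (H1 x); rewrite !inE /= => /negbFE ->.
  exact: Q1.
case: Hbd => _ _ finj _.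
have fw : f w != f v0 by apply: contra wv => /eqP /finj ->.
have [b tab] : exists b, t (f v0) b.
  case/connectP: (connected Htr (f v0) (f w)) => [[|b p]] /=.
    by move=> _ E0; move: fw; rewrite E0 eqxx.
  by move=> /andP[tb _] _; exists b.
have tba : t b (f v0) by rewrite (tsym Htr).
have Es : (setT : {set V}) = induced_cut t f (f v0) b :|: induced_cut t f b (f v0).
  apply/setP => x; rewrite !inE.
  have := comp_cover Htr (f x) tab; rewrite !inE => /orP[->|->] //; by rewrite orbT.
have Cs := cls_setT; rewrite Es in Cs *.
apply: (@union_Q _ E m c HE (leqnn _) d0) => //.
- move=> x; rewrite !cutE => H1 H2.
  by move: (comp_cover_disj Htr tab H1); rewrite H2.
- exact: cut_Q.
- exact: cut_Q.
- exact: cut_cls.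
- exact: cut_cls.
Qed.

Lemma cw_of : cw_le E c.
Proof.
exists (fun _ => d0).
have K := Q_setT (l := fun _ => d0) (fun _ _ _ => erefl).
have b : bijective (fun x : {x : V | x \in setT} => val x).
  apply: inj_card_bij; first exact: val_inj.
  by rewrite card_sig; apply: eq_leq; apply: eq_card => x; rewrite !inE.
exact: (ke_iso K b).
Qed.

End Rec.

Theorem part2 (C : forall V : finType, rel V -> Prop) (k : nat) :
  (forall (V : finType) (E : rel V), C V E -> is_graph E) ->
  (forall (V : finType) (E : rel V), C V E -> smw_le E k) ->
  exists c : nat, forall (V : finType) (E : rel V), C V E -> cw_le E c.
Proof.
move=> Hg Hs; exists (3 * (2 ^ k + k + 2)) => V E HC.
have [HE Eirr] := Hg V E HC.
case: (Hs V E HC) => [V0|[N [t [f [Hbd Hw]]]]].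
  have c_pos : 0 < 3 * (2 ^ k + k + 2) by rewrite muln_gt0 addn2.
  exists (fun _ => Ordinal c_pos); exact: empty_ke.
exact: (cw_of HE Eirr Hbd Hw).
Qed.


Theorem proposition1 :
  (forall (V : finType) (E : rel V) (k : nat),
      is_graph E -> tw_le E k -> smw_le E k.+1) /\
  (forall (C : forall V : finType, rel V -> Prop) (k : nat),
      (forall (V : finType) (E : rel V), C V E -> is_graph E) ->
      (forall (V : finType) (E : rel V), C V E -> smw_le E k) ->
      exists c : nat, forall (V : finType) (E : rel V), C V E -> cw_le E c).
Proof.
split; [exact: part1 | exact: part2].
Qed.
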